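(* Let $A$ be an MV-algebra such that the set $\operatorname{Der}(A)$ of $(\odot,\vee)$-derivations on $A$ is closed under pointwise $\wedge$ (so that it is a lattice under pointwise $\vee,\wedge$). Then $\chi^{(A)}=\{\chi^{(u)}:u\in A\}$ is a filter of the lattice $\operatorname{Der}(A)$, i.e. it is nonempty, closed under $\wedge$, and if $\chi^{(u)}\preceq d$ with $d\in\operatorname{Der}(A)$ then $d\in\chi^{(A)}$; here $\chi^{(u)}(1)=u$ and $\chi^{(u)}(x)=x$ for $x\neq 1$.
   Context: An MV-algebra is an algebra $(A,\oplus,{}^*,0)$ of type $(2,1,0)$ satisfying: $x\oplus(y\oplus z)=(x\oplus y)\oplus z$, $x\oplus y=y\oplus x$, $x\oplus 0=x$, $x^{**}=x$, $x\oplus 0^*=0^*$, $(x^*\oplus y)^*\oplus y=(y^*\oplus x)^*\oplus x$. Put $1=0^*$ and $x\odot y=(x^*\oplus y^* )^*$. The natural order is $x\le y$ iff $x^*\oplus y=1$, with lattice operations $x\vee y=(x\odot y^* )\oplus y$, $x\wedge y=x\odot(x^*\oplus y)$. A $(\odot,\vee)$-derivation on $A$ is a map $d:A\to A$ with $d(x\odot y)=(d(x)\odot y)\vee(x\odot d(y))$ for all $x,y\in A$. Maps are ordered by $d\preceq d'$ iff $d(x)\le d'(x)$ for all $x$, with pointwise $\vee,\wedge$. *)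

(* Defs.v *)
From Stdlib Require Import ClassicalEpsilon.

Record MVAlgebra := {
  mv_car :> Type;
  mv_oplus : mv_car -> mv_car -> mv_car;
  mv_star : mv_car -> mv_car;
  mv_zero : mv_car;
  mv_assoc : forall x y z, mv_oplus x (mv_oplus y z) = mv_oplus (mv_oplus x y) z;
  mv_comm : forall x y, mv_oplus x y = mv_oplus y x;
  mv_zero_r : forall x, mv_oplus x mv_zero = x;
  mv_starK : forall x, mv_star (mv_star x) = x;
  mv_one_abs : forall x, mv_oplus x (mv_star mv_zero) = mv_star mv_zero;
  mv_luk : forall x y,
    mv_oplus (mv_star (mv_oplus (mv_star x) y)) y
    = mv_oplus (mv_star (mv_oplus (mv_star y) x)) x
}.

Section MVDefs.
Variable A : MVAlgebra.

Definition mv_one : A := mv_star A (mv_zero A).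
Definition mv_odot (x y : A) : A :=
  mv_star A (mv_oplus A (mv_star A x) (mv_star A y)).
Definition mv_le (x y : A) : Prop := mv_oplus A (mv_star A x) y = mv_one.
Definition mv_join (x y : A) : A := mv_oplus A (mv_odot x (mv_star A y)) y.
Definition mv_meet (x y : A) : A := mv_odot x (mv_oplus A (mv_star A x) y).

Definition is_derivation (d : A -> A) : Prop :=
  forall x y, d (mv_odot x y) = mv_join (mv_odot (d x) y) (mv_odot x (d y)).

Definition map_meet (d1 d2 : A -> A) : A -> A := fun x => mv_meet (d1 x) (d2 x).
Definition map_le (d1 d2 : A -> A) : Prop := forall x, mv_le (d1 x) (d2 x).

Definition chi (u : A) : A -> A :=
  fun x => if excluded_middle_informative (x = mv_one) then u else x.

Definition in_chiA (d : A -> A) : Prop := exists u : A, forall x, d x = chi u x.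
End MVDefs.

(* Main.v *)
Require Import Defs.
From Stdlib Require Import ClassicalEpsilon.

Section L.
Variable A : MVAlgebra.
Local Notation "x ⊕ y" := (mv_oplus A x y) (at level 50, left associativity).
Local Notation "x ^*" := (mv_star A x) (at level 30).
Local Notation "0" := (mv_zero A).
Local Notation "1" := (mv_one A).

Lemma one_star : (1 ^*) = 0.
Proof. unfold mv_one. apply mv_starK. Qed.
Lemma zero_l (x : A) : 0 ⊕ x = x.
Proof. rewrite mv_comm. apply mv_zero_r. Qed.
Lemma one_r (x : A) : x ⊕ 1 = 1.
Proof. apply mv_one_abs. Qed.
Lemma one_l (x : A) : 1 ⊕ x = 1.
Proof. rewrite mv_comm. apply one_r. Qed.
Lemma compl_r (x : A) : x ⊕ (x ^*) = 1.
Proof.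
  pose proof (mv_luk A x 1) as H. rewrite !one_r, one_star, zero_l in H.

  rewrite mv_comm. symmetry. exact H.
Qed.
Lemma compl_l (x : A) : (x ^*) ⊕ x = 1.
Proof. rewrite mv_comm. apply compl_r. Qed.
Lemma star_inj (x y : A) : x ^* = y ^* -> x = y.
Proof. intro H. rewrite <- (mv_starK A x), H. apply mv_starK. Qed.
Lemma sum0 (a b : A) : a ⊕ b = 0 -> a = 0.
Proof.
  intro H. assert (E : (a ^*) ⊕ (a ⊕ b) = 1) by (rewrite mv_assoc, compl_l; apply one_l).
  rewrite H, mv_zero_r in E. apply star_inj. rewrite E. reflexivity.
Qed.
Lemma odot_comm (x y : A) : mv_odot A x y = mv_odot A y x.
Proof. unfold mv_odot. rewrite mv_comm. reflexivity. Qed.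
Lemma odot_assoc (x y z : A) : mv_odot A x (mv_odot A y z) = mv_odot A (mv_odot A x y) z.
Proof. unfold mv_odot. rewrite !mv_starK, mv_assoc. reflexivity. Qed.
Lemma odot_1 (x : A) : mv_odot A x 1 = x.
Proof. unfold mv_odot. rewrite one_star, mv_zero_r. apply mv_starK. Qed.
Lemma odot_0 (x : A) : mv_odot A x 0 = 0.
Proof. unfold mv_odot. fold (mv_one A). rewrite one_r. apply one_star. Qed.
Lemma odot_compl (x : A) : mv_odot A x (x ^*) = 0.
Proof. unfold mv_odot. rewrite mv_starK, compl_l. apply one_star. Qed.
Lemma join_comm (x y : A) : mv_join A x y = mv_join A y x.
Proof. unfold mv_join, mv_odot. rewrite !mv_starK. apply mv_luk. Qed.
Lemma le_join (x y : A) : mv_le A x y -> mv_join A x y = y.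
Proof.
  unfold mv_le, mv_join, mv_odot. rewrite mv_starK. intro H. rewrite H, one_star. apply zero_l.
Qed.
Lemma le_antisym (x y : A) : mv_le A x y -> mv_le A y x -> x = y.
Proof.
  intros H1 H2. rewrite <- (le_join _ _ H1), join_comm. symmetry; apply le_join; auto.
Qed.
Lemma odot_le (u y : A) : mv_le A (mv_odot A u y) y.
Proof.
  unfold mv_le. apply star_inj. rewrite one_star.
  assert (E : mv_odot A (mv_odot A u y) (y ^*) = 0)
    by (rewrite <- odot_assoc, odot_compl; apply odot_0).
  unfold mv_odot at 1 in E. rewrite (mv_starK A y) in E. exact E.
Qed.
Lemma join_idem (u : A) : mv_join A u u = u.
Proof. unfold mv_join. rewrite odot_compl. apply zero_l. Qed.
Lemma odot_eq1 (x y : A) : mv_odot A x y = 1 -> x = 1.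
Proof.
  unfold mv_odot. intro H. apply star_inj in H. apply sum0 in H.
  unfold mv_one. rewrite <- H. symmetry. apply mv_starK.
Qed.
Lemma join0 (a b : A) : mv_join A a b = 0 -> a = 0.
Proof.
  unfold mv_join. intro H. assert (Hb : b = 0) by (rewrite mv_comm in H; exact (sum0 _ _ H)).
  subst b. apply sum0 in H. fold (mv_one A) in H. rewrite odot_1 in H. exact H.
Qed.
Lemma chi_1 (u : A) : chi A u 1 = u.
Proof. unfold chi. destruct (excluded_middle_informative (1 = 1)); congruence. Qed.
Lemma chi_n (u x : A) : x <> 1 -> chi A u x = x.
Proof. intro. unfold chi. destruct (excluded_middle_informative (x = 1)); congruence. Qed.
Lemma meet_idem (x : A) : mv_meet A x x = x.
Proof. unfold mv_meet. rewrite compl_l. apply odot_1. Qed.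
End L.

Theorem proposition5p13 (A : MVAlgebra) :
  (forall d1 d2 : A -> A, is_derivation A d1 -> is_derivation A d2 ->
     is_derivation A (map_meet A d1 d2)) ->
  (* chi^(A) is a subset of Der(A) *)
  (forall u : A, is_derivation A (chi A u)) /\
  (* nonempty *)
  (exists d : A -> A, in_chiA A d) /\
  (* closed under pointwise meet *)
  (forall d1 d2 : A -> A, in_chiA A d1 -> in_chiA A d2 ->
     in_chiA A (map_meet A d1 d2)) /\
  (* upward closed in Der(A) *)
  (forall (u : A) (d : A -> A), is_derivation A d ->
     map_le A (chi A u) d -> in_chiA A d).
Proof.
  intros _. split; [|split; [|split]].
  - intros u x y.
    destruct (excluded_middle_informative (x = mv_one A)) as [Hx|Hx];
    destruct (excluded_middle_informative (y = mv_one A)) as [Hy|Hy].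
    + subst. rewrite odot_1, !chi_1, odot_1, odot_comm, odot_1. symmetry; apply join_idem.
    + subst. rewrite odot_comm, odot_1, chi_1, (chi_n _ _ _ Hy), (odot_comm _ (mv_one A)), odot_1.
      symmetry; apply le_join, odot_le.
    + subst. rewrite odot_1, chi_1, (chi_n _ _ _ Hx), odot_1, join_comm.
      symmetry. rewrite odot_comm. apply le_join, odot_le.
    + assert (Hxy : mv_odot A x y <> mv_one A) by (intro E; apply Hx; exact (odot_eq1 _ _ _ E)).
      rewrite !chi_n by assumption. symmetry; apply join_idem.
  - exists (chi A (mv_zero A)), (mv_zero A). reflexivity.
  - intros d1 d2 [u Hu] [v Hv]. exists (mv_meet A u v). intro x. unfold map_meet.
    rewrite Hu, Hv.
    destruct (excluded_middle_informative (x = mv_one A)) as [Hx|Hx].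
    + subst. rewrite !chi_1. reflexivity.
    + rewrite !chi_n by assumption. apply meet_idem.
  - intros u d Hd Hle. exists (d (mv_one A)). intro x.
    destruct (excluded_middle_informative (x = mv_one A)) as [Hx|Hx].
    + subst. rewrite chi_1. reflexivity.
    + rewrite chi_n by assumption.
      assert (H0 : d (mv_zero A) = mv_zero A).
      { pose proof (Hd (mv_zero A) (mv_zero A)) as E.
        rewrite odot_0, odot_0, (odot_comm _ (mv_zero A)), odot_0 in E.
        rewrite E. apply join_idem. }
      assert (Hdx : mv_le A (d x) x).
      { pose proof (Hd x (mv_star A x)) as E. rewrite odot_compl, H0 in E.
        symmetry in E. apply join0 in E. unfold mv_odot in E. rewrite mv_starK in E.
        apply star_inj. rewrite E. unfold mv_le. symmetry; apply one_star. }
      specialize (Hle x). rewrite chi_n in Hle by assumption.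
      apply le_antisym; assumption.
Qed.
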